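(* Let $X$ have a pdf $f$ satisfying Conditions (A) and (B) below. Suppose $X$ is quantized by the uniform quantizer $Q_{\mathrm{uni}}^\delta$ and the cells are assigned the real-valued Shannon code. Let $L$ be the resulting random codeword length. Then $$\lim_{\delta\to0}\frac{E[L^2]}{(E[L])^2}=1.$$
   Context: Let $X$ be a real random variable with pdf $f$. Condition (A): $f$ is continuous and differentiable, and its support is a bounded interval $I$. Condition (B): $\int_I f\log_2^2 f\,dx$ and $-\int_I f\log_2 f\,dx$ exist and are finite. The uniform quantizer $Q_{\mathrm{uni}}^\delta$ partitions $I$ into consecutive cells of length $\delta$. Let $p_i$ be the probability that $X$ falls in cell $i$. The real-valued Shannon code assigns length $l_i=-\log_2 p_i$ to cell $i$, and $L=l_i$ when $X$ is in cell $i$. *)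

(* Defs.v *)
From HB Require Import structures.
From mathcomp Require Import all_boot all_order all_algebra.
From mathcomp Require Import all_classical all_reals all_analysis.
Set Implicit Arguments. Unset Strict Implicit. Unset Printing Implicit Defensive.
Import Order.TTheory GRing.Theory Num.Theory.
Import numFieldNormedType.Exports.
Local Open Scope classical_set_scope.
Local Open Scope ring_scope.

Section Defs.
Variable R : realType.

Definition log2 (x : R) : R := ln x / ln 2.

Definition xlog2k (k : nat) (y : R) : R :=
  if y == 0 then 0 else y * (log2 y) ^+ k.

Definition is_pdf (f : R -> R) : Prop :=
  (forall x, 0 <= f x) /\ measurable_fun setT f /\
  (lebesgue_measure).-integrable setT (fun x => (f x)%:E) /\
  \int[lebesgue_measure]_(x in setT) f x = 1.

Definition pdf_support (f : R -> R) : set R := closure [set x | f x != 0].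

(* Uniform quantizer of I = [a,b] with step delta: cells
   C_k = [a + k delta, a + (k+1) delta) /\ [a,b], k = 0, ..., ncells - 1,
   where ncells = floor ((b - a)/delta) + 1; they partition [a,b]. *)
Definition ncells (a b delta : R) : nat := (Num.truncn ((b - a) / delta)).+1.

Definition cell (a b delta : R) (k : nat) : set R :=
  `[a + k%:R * delta, a + k.+1%:R * delta[%classic `&` `[a, b]%classic.

Definition pcell (f : R -> R) (a b delta : R) (k : nat) : R :=
  \int[lebesgue_measure]_(x in cell a b delta k) f x.

(* E[L^m] for the real-valued Shannon code l_k = - log2 p_k,
   i.e. sum_k p_k (- log2 p_k)^m  (cells with p_k = 0 contribute 0) *)
Definition momentL (m : nat) (f : R -> R) (a b delta : R) : R :=
  \sum_(k < ncells a b delta)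
     (if pcell f a b delta k == 0 then 0
      else pcell f a b delta k * (- log2 (pcell f a b delta k)) ^+ m).

End Defs.

(* Main.v *)
Require Import Defs.
From HB Require Import structures.
From mathcomp Require Import all_boot all_order all_algebra.
From mathcomp Require Import all_classical all_reals all_analysis.
From mathcomp Require Import ring lra.
Import Order.TTheory GRing.Theory Num.Theory.
Import numFieldNormedType.Exports.
Local Open Scope classical_set_scope.
Local Open Scope ring_scope.
Section Helpers.
Variable R : realType.

Lemma xln2_bound (y : R) : 0 < y -> y * (ln y)^+2 <= 4 * (y+1)^+2.
Proof.
move=> y0.
set s := Num.sqrt y.
have s0 : 0 < s by rewrite sqrtr_gt0.
have ys : y = s ^+ 2 by rewrite sqr_sqrtr // ltW.
have lny : ln y = ln s *+ 2 by rewrite ys lnXn.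
have h1 : ln s < s := ln_sublinear s0.
have h2 : - ln s < s^-1.
  rewrite -lnV ?posrE //; apply: ln_sublinear; by rewrite invr_gt0.
have st : s * s^-1 = 1 by rewrite mulfV // gt_eqF.
have h3 : - 1 < s * ln s.
  have : s * (- ln s) < s * s^-1 by rewrite ltr_pM2l.
  rewrite st mulrN; lra.
have h4 : s * ln s < s ^+ 2 by rewrite expr2 ltr_pM2l.
rewrite lny ys.
set L := ln s in h1 h2 h3 h4 *.
have -> : s ^+ 2 * (L *+ 2) ^+ 2 = 4 * (s * L) ^+ 2.
  by rewrite mulr2n; ring.
rewrite ler_pM2l ?ltr0n //.
set u := s * L in h3 h4 *.
nra.
Qed.

End Helpers.

Section Helpers2.
Variable R : realType.

Lemma ifp0 (p x : R) : (if p == 0 then 0 else p * x) = p * x.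
Proof. by case: eqP => [->|]; rewrite ?mul0r. Qed.

Lemma var_id N (p h : 'I_N -> R) (c : R) : \sum_k p k = 1 ->
  \sum_k p k * (h k - c)^+2 =
  \sum_k p k * h k ^+2 - 2 * c * \sum_k p k * h k + c^+2.
Proof.
move=> s1.
have -> : \sum_k p k * (h k - c)^+2 =
   \sum_k (p k * h k ^+2 - 2 * c * (p k * h k) + c^+2 * p k).
  by apply: eq_bigr => k _; ring.
rewrite big_split big_split /= sumrN -mulr_sumr -mulr_sumr s1 mulr1.
by [].
Qed.

Lemma ln2_gt0 : 0 < ln (2 : R).
Proof. by apply: ln_gt0; rewrite ltr1n. Qed.

Lemma log2_le (x y : R) : 0 < x -> x <= y -> log2 x <= log2 y.
Proof.
move=> x0 xy; rewrite /log2 ler_pM2r ?invr_gt0 ?ln2_gt0 //.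
by rewrite ler_ln ?posrE // (lt_le_trans x0).
Qed.

Lemma moments_bounds N (p : 'I_N -> R) (d M : R) :
  0 < d -> 0 < M -> (forall k, 0 <= p k) -> \sum_k p k = 1 ->
  (forall k, p k <= M * d) ->
  let m := fun n => \sum_(k < N) (if p k == 0 then 0 else p k * (- log2 (p k)) ^+ n) in
  - log2 (M * d) <= m 1%N /\
  0 <= m 2%N - (m 1%N)^+2 <= N%:R * d * (4 * (M+1)^+2 / (ln 2)^+2).
Proof.
move=> d0 M0 p0 s1 pM m.
have mE n : m n = \sum_k p k * (- log2 (p k)) ^+ n.
  by apply: eq_bigr => k _; rewrite ifp0.
split.
  rewrite mE -[X in X <= _]mul1r -s1 mulr_suml; apply: ler_sum => k _.
  have [->|pk] := eqVneq (p k) 0; first by rewrite !mul0r.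
  have pk0 : 0 < p k by rewrite lt_neqAle eq_sym pk p0.
  by rewrite expr1 ler_wpM2l // lerN2 log2_le.
have vid := @var_id N p (fun k => - log2 (p k)) (- log2 d) s1.
have vm := @var_id N p (fun k => - log2 (p k)) (m 1%N) s1.
have m1E : \sum_k p k * - log2 (p k) = m 1%N by rewrite mE; apply: eq_bigr => k _; rewrite expr1.
rewrite -!mE m1E in vid vm.
apply/andP; split.
  have : 0 <= \sum_k p k * (- log2 (p k) - m 1%N) ^+ 2.
    by apply: sumr_ge0 => k _; rewrite mulr_ge0 // sqr_ge0.
  rewrite vm; lra.
have : \sum_k p k * (- log2 (p k) - - log2 d) ^+ 2 <= N%:R * d * (4 * (M+1)^+2 / (ln 2)^+2).
  set K := 4 * (M+1)^+2 / (ln 2)^+2.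
  rewrite (_ : N%:R * d * K = \sum_(k < N) (d * K)); last first.
    by rewrite sumr_const card_ord -mulrA mulr_natl.
  apply: ler_sum => k _.
  have [->|pk] := eqVneq (p k) 0.
    by rewrite mul0r mulr_ge0 ?(ltW d0) // /K mulr_ge0 ?invr_ge0 ?sqr_ge0 // mulr_ge0 // sqr_ge0.
  have pk0 : 0 < p k by rewrite lt_neqAle eq_sym pk p0.
  set y := p k / d.
  have y0 : 0 < y by rewrite divr_gt0.
  have yM : y <= M by rewrite /y ler_pdivrMr.
  have -> : - log2 (p k) - - log2 d = - (ln y / ln 2).
    rewrite /y /log2 lnM ?posrE ?invr_gt0 // lnV ?posrE //; ring.
  have -> : p k * (- (ln y / ln 2)) ^+ 2 = d * (y * ln y ^+ 2) / (ln 2)^+2.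
    rewrite /y; field; by rewrite (gt_eqF ln2_gt0) (gt_eqF d0).
  rewrite /K -mulrA ler_pM2l // ler_pM2r ?invr_gt0 ?exprn_gt0 ?ln2_gt0 //.
  apply: (le_trans (@xln2_bound R y y0)).
  rewrite ler_pM2l ?ltr0n // ler_sqr ?nnegrE; lra.
move=> hA; have h := sqr_ge0 (m 1%N + log2 d); nra.
Qed.

End Helpers2.

Section Helpers3.
Variable R : realType.
Implicit Types (f : R -> R) (a b d M : R).

Lemma cell_meas a b d k : measurable (cell a b d k).
Proof. by apply: measurableI; apply: measurable_itv. Qed.

Lemma pcell_ge0 f a b d k : (forall x, 0 <= f x) -> 0 <= pcell f a b d k.
Proof.
move=> f0; apply: fine_ge0; apply: integral_ge0 => x _; by rewrite lee_fin.
Qed.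

Lemma pcell_le f a b d k M : 0 < d -> 0 <= M -> (forall x, 0 <= f x) ->
  (forall x, f x <= M) -> measurable_fun setT f ->
  pcell f a b d k <= M * d.
Proof.
move=> d0 M0 f0 fM mf.
have mc := cell_meas a b d k.
have h1 : (\int[lebesgue_measure]_(x in cell a b d k) (f x)%:E <=
           \int[lebesgue_measure]_(x in cell a b d k) (cst M%:E x))%E.
  apply: ge0_le_integral => //.
  - by move=> x _; rewrite lee_fin.
  - apply/measurable_realfun.measurable_EFinP; exact: measurable_funS mf.
  - by move=> x _; rewrite lee_fin.
have h2 : (lebesgue_measure (cell a b d k) <= d%:E)%E.
  apply: (@le_trans _ _ (lebesgue_measure [set` `[a + k%:R * d, a + k.+1%:R * d[])).
    apply: le_measure; rewrite ?inE; [exact: mc|exact: measurable_itv|by apply: subIsetl].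
  rewrite lebesgue_measure_itv /= lte_fin ifT; last by rewrite ltrD2l ltr_pM2r // ltr_nat.
  rewrite -EFinD lee_fin mulrSr; lra.
rewrite integral_cst // in h1.
have h3 : (\int[lebesgue_measure]_(x in cell a b d k) (f x)%:E <= (M * d)%:E)%E.
  apply: (le_trans h1); rewrite EFinM; apply: lee_wpmul2l => //; by rewrite lee_fin.
rewrite /pcell /Rintegral.
have g0 : (0 <= \int[lebesgue_measure]_(x in cell a b d k) (f x)%:E)%E.
  by apply: integral_ge0 => x _; rewrite lee_fin.
have fin : (\int[lebesgue_measure]_(x in cell a b d k) (f x)%:E)%E \is a fin_num.
  by rewrite ge0_fin_numE // (le_lt_trans h3) ?ltry.
by rewrite -lee_fin fineK.
Qed.


Lemma cell_trunc a b d (i : nat) x : 0 < d ->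
  cell a b d i x -> Num.trunc ((x - a) / d) = i.
Proof.
move=> d0 [/= + _]; rewrite in_itv /= => /andP[h1 h2].
apply: truncn_def; rewrite ler_pdivlMr // ltr_pdivrMr //; apply/andP; split; lra.
Qed.

Lemma pcell_sum f a b d : 0 < d -> a <= b -> (forall x, 0 <= f x) ->
  measurable_fun setT f ->
  (lebesgue_measure).-integrable setT (fun x => (f x)%:E) ->
  \int[lebesgue_measure]_(x in setT) f x = 1 ->
  (forall x, ~ `[a, b]%classic x -> f x = 0) ->
  \sum_(k < ncells a b d) pcell f a b d k = 1.
Proof.
move=> d0 ab f0 mf intf f1 fout.
set N := ncells a b d.
have cover : \big[setU/set0]_(i <- iota 0 N) cell a b d i = `[a, b]%classic.
  rewrite -bigcup_seq; apply/seteqP; split.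
    by move=> x [i _ [_ ]].
  move=> x xab; exists (Num.trunc ((x - a) / d)).
    change (Num.trunc ((x - a) / d) \in iota 0 N); rewrite mem_iota add0n /N /ncells ltnS; apply: le_truncn.
    move: xab; rewrite /= in_itv /= => /andP[h1 h2].
    by rewrite ler_pM2r ?invr_gt0 //; lra.
  split => //=.
  have xa : 0 <= (x - a) / d.
    move: xab; rewrite /= in_itv /= => /andP[h1 h2].
    by rewrite divr_ge0 //; lra.
  have /andP[h1 h2] := truncn_itv xa.
  rewrite ler_pdivlMr // ltr_pdivrMr // in h1 h2.
  rewrite in_itv /=; apply/andP; split; lra.
have triv : trivIset [set` iota 0 N] (cell a b d).
  apply/trivIsetP => i j _ _ ij; apply/seteqP; split => // x [ci cj].
  by move: ij; rewrite -(@cell_trunc _ _ _ _ _ d0 ci) -(@cell_trunc _ _ _ _ _ d0 cj) eqxx.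
have h : (\int[lebesgue_measure]_(x in `[a, b]%classic) (f x)%:E =
   \sum_(i <- iota 0 N) \int[lebesgue_measure]_(x in cell a b d i) (f x)%:E)%E.
  rewrite -cover; apply: ge0_integral_bigsetU => //.
  - exact: cell_meas.
  - exact: iota_uniq.
  - rewrite cover; apply/(measurable_realfun.measurable_EFinP _ f); exact: measurable_funS mf.
  - by move=> x _; rewrite lee_fin.
have intS : (\int[lebesgue_measure]_(x in setT) (f x)%:E)%E = 1%:E.
  rewrite -f1 /Rintegral fineK //; exact: integrable_fin_num.
have eab : (\int[lebesgue_measure]_(x in `[a, b]%classic) (f x)%:E)%E =
           (\int[lebesgue_measure]_(x in setT) (f x)%:E)%E.
  rewrite integral_mkcond; apply: eq_integral => x _; rewrite patchE.
  case: ifPn => // /negP; rewrite inE => /fout ->; done.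
rewrite eab intS in h.
apply/eqP; rewrite -(@eqe R) h -sumEFin.
rewrite -(big_mkord xpredT (fun i => (pcell f a b d i)%:E)) /index_iota subn0.
apply/eqP; apply: eq_bigr => i _.
rewrite /pcell /Rintegral fineK //.
apply: integrable_fin_num; first exact: cell_meas.
apply: integrableS intf => //; exact: cell_meas.
Qed.

End Helpers3.

Theorem proposition1 (R : realType) (f : R -> R) (a b : R) :
  is_pdf f ->
  (* Condition (A) *)
  a < b ->
  pdf_support f = `[a, b]%classic ->
  {within `[a, b], continuous f} ->
  (forall x, x \in `]a, b[ -> derivable f x 1) ->
  (* Condition (B) *)
  (lebesgue_measure).-integrable `[a, b]%classic (fun x => (xlog2k 2 (f x))%:E) ->
  (lebesgue_measure).-integrable `[a, b]%classic (fun x => (- xlog2k 1 (f x))%:E) ->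
  (fun delta : R => momentL 2 f a b delta / (momentL 1 f a b delta) ^+ 2)
    @ 0^'+ --> (1 : R).
Proof.
move=> [f0 [mf [intf f1]]] ab supp fcont _ _ _.
have fout : forall x, ~ `[a, b]%classic x -> f x = 0.
  move=> x xab; apply/eqP; apply/negPn/negP => fx; apply: xab.
  rewrite -supp; apply: subset_closure; exact: fx.
have [c _ fc] := EVT_max (ltW ab) fcont.
set M := f c + 1.
have M0 : 0 < M by rewrite /M ltr_wpDl ?f0.
have fM : forall x, f x <= M.
  move=> x; have [xab|xab] := boolP (x \in `[a, b]).
    by rewrite /M ler_wpDr ?fc.
  rewrite fout ?ltW //; move=> xab'; move/negP: xab; apply; exact: xab'.
set K := 4 * (M + 1) ^+ 2 / ln (2 : R) ^+ 2.
have K0 : 0 <= K.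
  by rewrite /K mulr_ge0 ?invr_ge0 ?sqr_ge0 // mulr_ge0 // sqr_ge0.
set V := (b - a + 1) * K.
have V0 : 0 <= V by rewrite /V mulr_ge0 //; lra.
apply/cvgrPdist_lt => e e0.
set T := V / e + 1.
have T1 : 1 <= T by rewrite /T lerDr divr_ge0 // ltW.
have VeT : V < e * T.
  rewrite /T mulrDr mulrCA mulfV ?gt_eqF // mulr1; lra.
set d0 := Num.min 1 (expR (- (T * ln 2)) / M).
have d00 : 0 < d0 by rewrite /d0 lt_min ltr01 /= divr_gt0 ?expR_gt0.
near=> t.
have t0 : 0 < t by near: t; exact: nbhs_right_gt.
have td : t < d0 by near: t; exact: nbhs_right_lt.
have t1 : t < 1 by move: td; rewrite /d0 lt_min => /andP[].
have tM : M * t < expR (- (T * ln 2)).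
  by move: td; rewrite /d0 lt_min => /andP[_]; rewrite ltr_pdivlMr // mulrC.
have psum := @pcell_sum R f a b t t0 (ltW ab) f0 mf intf f1 fout.
have hb := @moments_bounds R (ncells a b t) (fun k => pcell f a b t k) t M t0 M0
   (fun k => @pcell_ge0 R f a b t k f0) psum (fun k => @pcell_le R f a b t k M t0 (ltW M0) f0 fM mf).
move: hb; cbv zeta; case=> h1 /andP[h2 h3].
have {h1} h1 : - log2 (M * t) <= momentL 1 f a b t := h1.
have {h2} h2 : 0 <= momentL 2 f a b t - momentL 1 f a b t ^+ 2 := h2.
have {h3} h3 : momentL 2 f a b t - momentL 1 f a b t ^+ 2 <=
        (ncells a b t)%:R * t * K := h3.
set m1 := momentL 1 f a b t in h1 h2 h3 *.
set m2 := momentL 2 f a b t in h2 h3 *.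
have Nt : (ncells a b t)%:R * t <= b - a + 1.
  rewrite /ncells -addn1 natrD mulrDl mul1r.
  have ba : 0 <= (b - a) / t by rewrite divr_ge0 ?(ltW t0) //; lra.
  have := truncn_le ((b - a) / t); rewrite ba => /(ler_wpM2r (ltW t0)).
  rewrite -mulrA mulVf ?gt_eqF // mulr1; lra.
have h3' : m2 - m1 ^+ 2 <= V.
  apply: (le_trans h3); rewrite /V ler_wpM2r //.
have m1T : T < m1.
  apply: (lt_le_trans _ h1).
  have lnMt : ln (M * t) < - (T * ln 2).
    by rewrite -[X in _ < X]expRK ltr_ln ?posrE ?mulr_gt0 ?expR_gt0.
  rewrite /log2 -mulNr ltr_pdivlMr ?ln2_gt0 //.
  lra.
have m10 : 0 < m1 by apply: (lt_trans _ m1T); lra.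
have m1sq : 0 < m1 ^+ 2 by rewrite exprn_gt0.
rewrite distrC ger0_norm; last first.
  rewrite subr_ge0 ler_pdivlMr // mul1r; lra.
rewrite -[X in _ - X](@divff _ (m1 ^+ 2)) ?gt_eqF // -mulrBl.
rewrite ltr_pdivrMr //.
have : V < e * m1 ^+ 2.
  apply: (lt_le_trans VeT); rewrite ler_pM2l //.
  rewrite expr2; nra.
lra.
Unshelve. all: by end_near.
Qed.
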